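(* Let $\mathcal N$ be a one-layer ReLU CNN with input dimension $n_0^{(1)}\times n_0^{(2)}\times d_0$, $d_1$ filters of dimension $f_1^{(1)}\times f_1^{(2)}\times d_0$ and stride $s_1$, where $n_0^{(1)},n_0^{(2)},d_0,f_1^{(1)},f_1^{(2)},s_1$ are fixed. Then as $d_1\to\infty$, the maximal number of linear regions satisfies $R_{\mathcal N}=\Theta\big(d_1^{\#\bigcup_{(i,j)\in I_{\mathcal N}}S_{i,j}}\big)$. In particular, if $\bigcup_{(i,j)\in I_{\mathcal N}}S_{i,j}=\{(a,b,c):1\le a\le n_0^{(1)},1\le b\le n_0^{(2)},1\le c\le d_0\}$, then $R_{\mathcal N}=\Theta\big(d_1^{\,n_0^{(1)}n_0^{(2)}d_0}\big)$.
   Context: One-layer ReLU CNN: input $X^0\in\mathbb R^{n_0^{(1)}\times n_0^{(2)}\times d_0}$; filters $W^{1,k}\in\mathbb R^{f_1^{(1)}\times f_1^{(2)}\times d_0}$, biases $B^{1,k}$, $1\le k\le d_1$, stride $s_1$; $n_1^{(r)}=\lfloor (n_0^{(r)}-f_1^{(r)})/s_1\rfloor+1$; pre-activations $Z^1_{i,j,k}=\sum_{a,b,c}W^{1,k}_{a,b,c}X^0_{a+(i-1)s_1,b+(j-1)s_1,c}+B^{1,k}$. An activation pattern assigns $\pm1$ to each neuron $(i,j,k)$; its region is the set of inputs where each pre-activation times its sign is positive. $R_{\mathcal N}$ is the maximum over all parameter values of the number of activation patterns with nonempty region. $I_{\mathcal N}=\{(i,j):1\le i\le n_1^{(1)},1\le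 j\le n_1^{(2)}\}$ and $S_{i,j}=\{(a+(i-1)s_1,b+(j-1)s_1,c):1\le a\le f_1^{(1)},1\le b\le f_1^{(2)},1\le c\le d_0\}$. $f=\Theta(g)$ means $c_1g\le f\le c_2 g$ for some constants $c_1,c_2>0$ and all sufficiently large arguments. *)

(* Defs.v *)
From HB Require Import structures.
From mathcomp Require Import all_boot all_order all_algebra.
From mathcomp Require Import boolp reals.
Set Implicit Arguments. Unset Strict Implicit. Unset Printing Implicit Defensive.
Import Order.TTheory GRing.Theory Num.Theory.
Local Open Scope ring_scope.

Definition out_dim (n f s : nat) : nat := ((n - f) %/ s).+1.

Section CNN.
Variable R : realType.
Variables (n01 n02 d0 f1 f2 s d1 : nat).

Notation n11 := (out_dim n01 f1 s).
Notation n12 := (out_dim n02 f2 s).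

(* Input tensor X^0 in R^{n01 x n02 x d0} (0-based indices). *)
Definition input := 'I_n01 -> 'I_n02 -> 'I_d0 -> R.

(* Entry of X at natural-number position (p,q,c); 0 outside the range
   (never used when f1 <= n01, f2 <= n02). *)
Definition xat (X : input) (p q : nat) (c : 'I_d0) : R :=
  match (insub p : option 'I_n01), (insub q : option 'I_n02) with
  | Some p', Some q' => X p' q' c
  | _, _ => 0
  end.

Definition filters := 'I_d1 -> 'I_f1 -> 'I_f2 -> 'I_d0 -> R.
Definition biases := 'I_d1 -> R.

(* Pre-activation Z^1_{i,j,k} (0-based: position a + i*s). *)
Definition preact (W : filters) (B : biases) (X : input)
    (i : 'I_n11) (j : 'I_n12) (k : 'I_d1) : R :=
  (\sum_(a < f1) \sum_(b < f2) \sum_(c < d0)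
      W k a b c * xat X (a + i * s)%N (b + j * s)%N c) + B k.

(* Activation patterns: true = +1, false = -1. *)
Definition pattern := {ffun 'I_n11 * 'I_n12 * 'I_d1 -> bool}.

Definition region_nonempty (W : filters) (B : biases) (sg : pattern) : Prop :=
  exists X : input, forall i j k,
    if sg (i, j, k) then 0 < preact W B X i j k else preact W B X i j k < 0.

Definition num_regions (W : filters) (B : biases) : nat :=
  #|[set sg : pattern | `[< region_nonempty W B sg >]]|.

(* R_N: maximum over all parameter values (the count is at most #|pattern|). *)
Definition max_regions : nat :=
  \max_(r < #|{: pattern}|.+1 | `[< exists W B, num_regions W B = r >]) r.
End CNN.

(* # of the union over (i,j) in I_N of S_{i,j}, a subset of the input index set. *)
Definition covered_count (n01 n02 d0 f1 f2 s : nat) : nat :=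
  #|[set x : 'I_n01 * 'I_n02 * 'I_d0 |
      [exists i : 'I_(out_dim n01 f1 s), exists j : 'I_(out_dim n02 f2 s),
       exists a : 'I_f1, exists b : 'I_f2,
         (x.1.1 == a + i * s :> nat)%N && (x.1.2 == b + j * s :> nat)%N]]|.

Definition BigTheta (R : realType) (f g : nat -> nat) : Prop :=
  exists (c1 c2 : R), 0 < c1 /\ 0 < c2 /\
    exists N : nat, forall d, (N <= d)%N ->
      c1 * (g d)%:R <= (f d)%:R /\ (f d)%:R <= c2 * (g d)%:R.

(* Main.v *)
Require Import Defs.
From HB Require Import structures.
From mathcomp Require Import all_boot all_order all_algebra.
From mathcomp Require Import boolp reals.
From mathcomp Require Import ring lra zify.
Set Implicit Arguments. Unset Strict Implicit. Unset Printing Implicit Defensive.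
Import Order.TTheory GRing.Theory Num.Theory.
Local Open Scope ring_scope.

Section Arrgt.
Variable R : realFieldType.
Variables (T N : finType).

Definition sgn_ok (b : bool) (v : R) := if b then 0 < v else v < 0.

Definition isAff (S : {set T}) (g : (T -> R) -> R) :=
  exists c : T -> R, exists c0 : R,
   (forall i, i \notin S -> c i = 0) /\ forall x, g x = \sum_i c i * x i + c0.

Definition pats (A : {set N}) (g : N -> (T -> R) -> R) : {set {ffun N -> bool}} :=
  [set σ : {ffun N -> bool} | [forall n in ~: A, ~~ σ n] &&
     `[< exists x, forall n, n \in A -> sgn_ok (σ n) (g n x) >]].

Lemma isAff_conv (S : {set T}) g (a b : R) x1 x2 : isAff S g -> a + b = 1 ->
  g (fun i => a * x1 i + b * x2 i) = a * g x1 + b * g x2.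
Proof.
move=> [c [c0 [_ Hg]]] Hab; rewrite !Hg.
under eq_bigr => i _ do rewrite mulrDr mulrCA [c i * (b * _)]mulrCA.
rewrite big_split /= -!mulr_sumr.
have -> : b = 1 - a by rewrite -Hab; ring.
ring.
Qed.

Definition coef (g : (T -> R) -> R) j := g (fun i => (i == j)%:R) - g (fun _ => 0).

Lemma coefE g c c0 j : (forall x, g x = \sum_i c i * x i + c0) -> coef g j = c j.
Proof.
move=> Hg; rewrite /coef !Hg (bigD1 j) //= eqxx mulr1 big1 => [|i /negbTE -> ]; last by rewrite mulr0.
rewrite big1 => [|i _]; last by rewrite mulr0.
rewrite addr0 add0r; ring.
Qed.

Lemma sgn_ok_conv s u v a b : sgn_ok s u -> sgn_ok s v -> 0 < a -> 0 < b ->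
  sgn_ok s (a * u + b * v).
Proof.
case: s => /= Hu Hv Ha Hb.
  by apply: addr_gt0; apply: mulr_gt0.
have : 0 < a * (- u) + b * (- v) by apply: addr_gt0; apply: mulr_gt0 => //; rewrite oppr_gt0.
by rewrite !mulrN -opprD oppr_gt0.
Qed.

Lemma expn_mono_base m n e : (m <= n)%N -> (m ^ e <= n ^ e)%N.
Proof. by case: e => [//|e] H; rewrite leq_exp2r. Qed.

Lemma exp_step k s : (k.+1 ^ s.+1 + k.+1 ^ s <= k.+2 ^ s.+1)%N.
Proof.
have H : (k.+1 ^ s <= k.+2 ^ s)%N by apply: expn_mono_base.
rewrite !expnS; nia.
Qed.
Lemma pats0 g : (#|pats set0 g| <= 1)%N.
Proof.
rewrite -(cards1 [ffun _ : N => false]); apply: subset_leq_card; apply/subsetP => σ.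
rewrite in_set => /andP[/forall_inP H _]; rewrite in_set1; apply/eqP/ffunP => n.
rewrite ffunE; apply/negbTE; apply: H; by rewrite in_setC in_set0.
Qed.

Lemma pats_bound k : forall (A : {set N}) (S : {set T}) g, #|A| = k ->
  (forall n, n \in A -> isAff S (g n)) -> (#|pats A g| <= k.+1 ^ #|S|)%N.
Proof.
elim: k => [|k IH] A S g HA Haff.
  move/eqP: HA; rewrite cards_eq0 => /eqP ->; rewrite exp1n; exact: pats0.
have [n0 Hn0] : exists n0, n0 \in A.
  by apply/set0Pn; rewrite -card_gt0 HA.
set A' := A :\ n0.
have HA' : #|A'| = k by move: HA; rewrite (cardsD1 n0) Hn0 add1n => -[].
have Haff' : forall n, n \in A' -> isAff S (g n).
  by move=> n; rewrite in_setD1 => /andP[_]; exact: Haff.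
pose h (σ : {ffun N -> bool}) := [ffun n => if n == n0 then false else σ n].
set Bs := [set σ : {ffun N -> bool} | σ n0].
have Hh : forall σ, σ \in pats A g -> h σ \in pats A' g.
  move=> σ; rewrite !in_set => /andP[/forall_inP Hout /asboolP [x Hx]].
  apply/andP; split.
    apply/forall_inP => n; rewrite in_setC in_setD1 ffunE negb_and negbK.
    case: eqP => //= _ Hn; apply: Hout; by rewrite in_setC.
  apply/asboolP; exists x => n; rewrite in_setD1 => /andP[Hn Hn'].
  rewrite ffunE (negbTE Hn); exact: Hx.
set Pos := pats A g :&: Bs. set Neg := pats A g :\: Bs.
have Hinj : forall (D : {set {ffun N -> bool}}) b, (forall σ, σ \in D -> σ n0 = b) -> {in D &, injective h}.
  move=> D b HD σ1 σ2 H1 H2 Heq; apply/ffunP => n.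
  case: (eqVneq n n0) => [->|Hn]; first by rewrite (HD _ H1) (HD _ H2).
  by move/ffunP: Heq => /(_ n); rewrite !ffunE (negbTE Hn).
have cPos : #|h @: Pos| = #|Pos|.
  apply: card_in_imset; apply: (Hinj _ true) => σ.
  by rewrite in_setI => /andP[_ H]; move: H; rewrite in_set.
have cNeg : #|h @: Neg| = #|Neg|.
  apply: card_in_imset; apply: (Hinj _ false) => σ.
  by rewrite in_setD => /andP[H _]; move: H; rewrite in_set => /negbTE.
have HU : (#|h @: Pos :|: h @: Neg| <= k.+1 ^ #|S|)%N.
  apply: leq_trans (IH A' S g HA' Haff'); apply: subset_leq_card; apply/subsetP => σ'.
  rewrite in_setU => /orP[] /imsetP [σ Hσ ->]; apply: Hh; move: Hσ.
    by rewrite in_setI => /andP[].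
  by rewrite in_setD => /andP[].
have Htot : #|pats A g| = (#|h @: Pos :|: h @: Neg| + #|h @: Pos :&: h @: Neg|)%N.
  by rewrite cardsUI cPos cNeg cardsID.
rewrite Htot.
have [c [c0 [Hc Hg0]]] := Haff n0 Hn0.
have Hint : forall σ', σ' \in h @: Pos :&: h @: Neg -> exists x1 x2,
    [/\ 0 < g n0 x1, g n0 x2 < 0, forall n, n \in A' -> sgn_ok (σ' n) (g n x1),
       forall n, n \in A' -> sgn_ok (σ' n) (g n x2) & σ' \in pats A' g].
  move=> σ'; rewrite in_setI => /andP[/imsetP[σ1 H1 E1] /imsetP[σ2 H2 E2]].
  move: H1 H2; rewrite in_setI in_setD => /andP[HP1 Hb1] /andP[Hb2 HP2].
  rewrite !in_set in Hb1 Hb2.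
  have HP1' := Hh _ HP1.
  rewrite in_set in HP1; rewrite in_set in HP2.
  case/andP: HP1 => _ /asboolP[x1 Hx1]; case/andP: HP2 => _ /asboolP[x2 Hx2].
  exists x1, x2; split.
  - by have := Hx1 n0 Hn0; rewrite /sgn_ok Hb1.
  - by have := Hx2 n0 Hn0; rewrite /sgn_ok (negbTE Hb2).
  - move=> n; rewrite in_setD1 => /andP[Hn HnA]; rewrite E1 ffunE (negbTE Hn); exact: Hx1.
  - move=> n; rewrite in_setD1 => /andP[Hn HnA]; rewrite E2 ffunE (negbTE Hn); exact: Hx2.
  - by rewrite E1.
case: (pselect (exists j, c j != 0)) => [[j Hj]|Hno].
  have HjS : j \in S by apply: contraNT Hj => /Hc ->.
  pose g'' := fun n x => g n x - coef (g n) j / c j * g n0 x.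
  have Haff'' : forall n, n \in A' -> isAff (S :\ j) (g'' n).
    move=> n Hn; have [cn [cn0 [Hcn Hgn]]] := Haff' n Hn.
    exists (fun i => cn i - (cn j / c j) * c i), (cn0 - (cn j / c j) * c0); split.
      move=> i; rewrite in_setD1 negb_and negbK => /orP[/eqP ->| Hi].
        by rewrite divfK ?subrr.
      by rewrite (Hcn i Hi) (Hc i Hi) mulr0 subr0.
    move=> x; rewrite /g'' (coefE j Hgn) Hgn Hg0.
    rewrite [in RHS](eq_bigr (fun i => cn i * x i - cn j / c j * (c i * x i))) => [|i _]; last by rewrite mulrBl mulrA.
    rewrite sumrB -mulr_sumr; ring.
  have HI : (#|h @: Pos :&: h @: Neg| <= k.+1 ^ #|S :\ j|)%N.
    apply: leq_trans (IH A' (S :\ j) g'' HA' Haff''); apply: subset_leq_card.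
    apply/subsetP => σ' /Hint [x1 [x2 [f1p f2n Hx1 Hx2 Hσ']]].
    rewrite in_set; apply/andP; split; first by move: Hσ'; rewrite in_set => /andP[].
    apply/asboolP.
    set f1 := g n0 x1 in f1p; set f2 := g n0 x2 in f2n.
    have Hd : f1 - f2 != 0 by rewrite gt_eqF // subr_gt0 (lt_trans f2n).
    pose a := - f2 / (f1 - f2); pose b := f1 / (f1 - f2).
    have Ha : 0 < a by apply: divr_gt0; [rewrite oppr_gt0 | rewrite subr_gt0 (lt_trans f2n)].
    have Hb : 0 < b by apply: divr_gt0 => //; rewrite subr_gt0 (lt_trans f2n).
    have Hab : a + b = 1 by rewrite /a /b; field.
    exists (fun i => a * x1 i + b * x2 i) => n Hn.
    rewrite /g'' (isAff_conv _ _ (Haff' n Hn) Hab) (isAff_conv _ _ (Haff n0 Hn0) Hab).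
    have -> : a * f1 + b * f2 = 0 by rewrite /a /b; field.
    rewrite mulr0 subr0; apply: sgn_ok_conv => //; [exact: Hx1 | exact: Hx2].
  rewrite (cardsD1 j S) HjS add1n; apply: leq_trans (exp_step k _); apply: leq_add => //.
  by move: HU; rewrite (cardsD1 j S) HjS add1n.
have Hc0 : forall x, g n0 x = c0.
  move=> x; rewrite Hg0 big1 ?add0r // => i _.
  have -> : c i = 0 by apply/eqP; apply: contra_notT Hno => Hi; exists i.
  by rewrite mul0r.
have -> : #|h @: Pos :&: h @: Neg| = 0%N.
  apply/eqP; rewrite cards_eq0; apply/eqP/setP => σ'; rewrite in_set0.
  apply/negP => /Hint [x1 [x2 [f1p f2n _ _ _]]].
  by move: f1p f2n; rewrite !Hc0 => H1 H2; have := lt_trans H2 H1; rewrite ltxx.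
rewrite addn0; apply: leq_trans HU _; exact: expn_mono_base.
Qed.
End Arrgt.

Section Closure.
Variable R : realFieldType.
Variable T : finType.

Lemma isAff_ext (S : {set T}) (g1 g2 : (T -> R) -> R) : (forall x, g1 x = g2 x) -> isAff S g1 -> isAff S g2.
Proof. move=> E [c [c0 [H1 H2]]]; exists c, c0; split => // x; by rewrite -E. Qed.

Lemma isAff_const (S : {set T}) (v : R) : isAff S (fun _ => v).
Proof.
exists (fun _ => 0), v; split => // x; by rewrite big1 ?add0r // => i _; rewrite mul0r.
Qed.

Lemma isAff_coord (S : {set T}) p : p \in S -> isAff S (fun x : T -> R => x p).
Proof.
move=> Hp; exists (fun i => (i == p)%:R), 0; split.
  by move=> i Hi; case: eqP Hi => // -> ; rewrite Hp.
move=> x; rewrite addr0 (bigD1 p) //= eqxx mul1r big1 ?addr0 // => i /negbTE ->.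
by rewrite mul0r.
Qed.

Lemma isAff_add (S : {set T}) (g1 g2 : (T -> R) -> R) : isAff S g1 -> isAff S g2 ->
  isAff S (fun x => g1 x + g2 x).
Proof.
move=> [c [c0 [H1 H2]]] [d [d0 [K1 K2]]].
exists (fun i => c i + d i), (c0 + d0); split.
  by move=> i Hi; rewrite H1 // K1 // addr0.
move=> x; rewrite H2 K2.
under [in RHS]eq_bigr => i _ do rewrite mulrDl.
rewrite big_split /=; ring.
Qed.

Lemma isAff_scal (S : {set T}) (a : R) (g : (T -> R) -> R) : isAff S g -> isAff S (fun x => a * g x).
Proof.
move=> [c [c0 [H1 H2]]]; exists (fun i => a * c i), (a * c0); split.
  by move=> i Hi; rewrite H1 // mulr0.
move=> x; rewrite H2 mulrDr mulr_sumr.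
by congr (_ + _); apply: eq_bigr => i _; rewrite mulrA.
Qed.

Lemma isAff_sumseq (S : {set T}) (I : Type) (F : I -> (T -> R) -> R) (r : seq I) :
  (forall a, isAff S (F a)) -> isAff S (fun x => \sum_(a <- r) F a x).
Proof.
move=> H; elim: r => [|a r IH].
  by apply: (isAff_ext (g1 := fun _ => 0)) => [x|]; [rewrite big_nil | exact: isAff_const].
apply: (isAff_ext (g1 := fun x => F a x + \sum_(a <- r) F a x)) => [x|].
  by rewrite big_cons.
exact: isAff_add.
Qed.

Lemma isAff_sum (S : {set T}) (I : finType) (F : I -> (T -> R) -> R) :
  (forall a, isAff S (F a)) -> isAff S (fun x => \sum_a F a x).
Proof. exact: isAff_sumseq. Qed.
End Closure.

Section CNNProof.
Variable R : realType.
Variables (n01 n02 d0 f1 f2 s : nat).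
Hypotheses (hf1 : (0 < f1 <= n01)%N) (hf2 : (0 < f2 <= n02)%N)
    (hd0 : (0 < d0)%N) (hs : (0 < s)%N).

Local Notation n11 := (out_dim n01 f1 s).
Local Notation n12 := (out_dim n02 f2 s).
Local Notation T := ('I_n01 * 'I_n02 * 'I_d0)%type.
Local Notation O := ('I_f1 * 'I_f2 * 'I_d0)%type.

Definition Cov : {set T} :=
  [set x : 'I_n01 * 'I_n02 * 'I_d0 |
      [exists i : 'I_(out_dim n01 f1 s), exists j : 'I_(out_dim n02 f2 s),
       exists a : 'I_f1, exists b : 'I_f2,
         (x.1.1 == a + i * s :> nat)%N && (x.1.2 == b + j * s :> nat)%N]].

Lemma covE : covered_count n01 n02 d0 f1 f2 s = #|Cov|.
Proof. by []. Qed.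

Lemma pos_okg n f (hf : (0 < f <= n)%N) (i : 'I_(out_dim n f s)) (a : 'I_f) : (a + i * s < n)%N.
Proof.
have Hi : (i <= (n - f) %/ s)%N by rewrite -ltnS; exact: ltn_ord.
have H1 : (i * s <= n - f)%N.
  apply: leq_trans (leq_trunc_div (n - f) s); by rewrite leq_mul2r Hi orbT.
have Ha := ltn_ord a; move: hf => /andP[_ hf]; lia.
Qed.

Definition pos1 (i : 'I_n11) (a : 'I_f1) : 'I_n01 := Ordinal (pos_okg hf1 i a).
Definition pos2 (j : 'I_n12) (b : 'I_f2) : 'I_n02 := Ordinal (pos_okg hf2 j b).

Lemma xat_in (X : input R n01 n02 d0) (i : 'I_n11) (j : 'I_n12) (a : 'I_f1) (b : 'I_f2) c :
  xat X (a + i * s) (b + j * s) c = X (pos1 i a) (pos2 j b) c.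
Proof.
rewrite /xat (insubT (fun p => p < n01)%N (pos_okg hf1 i a)).
by rewrite (insubT (fun p => p < n02)%N (pos_okg hf2 j b)).
Qed.

Lemma pos_cov (i : 'I_n11) (j : 'I_n12) (a : 'I_f1) (b : 'I_f2) c : (pos1 i a, pos2 j b, c) \in Cov.
Proof.
rewrite inE; apply/existsP; exists i; apply/existsP; exists j.
apply/existsP; exists a; apply/existsP; exists b; by rewrite /= !eqxx.
Qed.

Lemma num_upper d1 (W : filters R d0 f1 f2 d1) (B : biases R d1) :
  (num_regions n01 n02 s W B <= (n11 * n12 * d1).+1 ^ #|Cov|)%N.
Proof.
pose g := fun (n : 'I_n11 * 'I_n12 * 'I_d1) (x : T -> R) =>
  preact W B (fun a b c => x (a, b, c)) n.1.1 n.1.2 n.2.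
have Hc : #|[set: 'I_n11 * 'I_n12 * 'I_d1]| = (n11 * n12 * d1)%N.
  by rewrite cardsT !card_prod !card_ord.
have Haff : forall n, n \in [set: 'I_n11 * 'I_n12 * 'I_d1] -> isAff Cov (g n).
  move=> [[i j] k] _; rewrite /g /preact /=.
  apply: isAff_add; last exact: isAff_const.
  apply: isAff_sum => a; apply: isAff_sum => b; apply: isAff_sum => c.
  apply: isAff_scal.
  apply: (isAff_ext (g1 := fun x : T -> R => x (pos1 i a, pos2 j b, c))).
    by move=> x; rewrite xat_in.
  exact: isAff_coord (pos_cov i j a b c).
have HP := pats_bound Hc Haff.
apply: (leq_trans _ HP); rewrite /num_regions.
apply: subset_leq_card; apply/subsetP => σ; rewrite !inE => /asboolP [X HX].
apply/andP; split; first by apply/forall_inP => n; rewrite !inE.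
apply/asboolP; exists (fun p => X p.1.1 p.1.2 p.2) => -[[i j] k] _.
by have := HX i j k.
Qed.


Lemma HF : (0 < #|{: O}|)%N.
Proof.
rewrite !card_prod !card_ord !muln_gt0.
by move: hf1 hf2 => /andP[-> _] /andP[-> _]; rewrite hd0.
Qed.

Definition off d1 (k : 'I_d1) : O := enum_val (Ordinal (ltn_pmod k HF)).

Definition Wl d1 : filters R d0 f1 f2 d1 := fun k a b c => ((a, b, c) == off k)%:R.
Definition Bl d1 : biases R d1 := fun k => - (k %/ #|{: O}|)%:R.
Arguments Wl : clear implicits.
Arguments Bl : clear implicits.

Definition Xg r (g : {ffun T -> 'I_r.+1}) : input R n01 n02 d0 :=
  fun a b c => (g (a, b, c) : nat)%:R - 2^-1.

Lemma sum3_collapse (G : 'I_f1 -> 'I_f2 -> 'I_d0 -> R) (o : O) :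
  \sum_a \sum_b \sum_c ((a, b, c) == o)%:R * G a b c = G o.1.1 o.1.2 o.2.
Proof.
case: o => [[a0 b0] c0] /=.
rewrite (bigD1 a0) //= [X in _ + X]big1 => [|a Ha]; last first.
  rewrite big1 // => b _; rewrite big1 // => c _.
  by rewrite !xpair_eqE (negbTE Ha) mul0r.
rewrite addr0 (bigD1 b0) //= [X in _ + X]big1 => [|b Hb]; last first.
  rewrite big1 // => c _.
  by rewrite !xpair_eqE eqxx (negbTE Hb) mul0r.
rewrite addr0 (bigD1 c0) //= [X in _ + X]big1 => [|c Hc]; last first.
  by rewrite !xpair_eqE !eqxx (negbTE Hc) mul0r.
by rewrite addr0 !eqxx mul1r.
Qed.

Definition posT (i : 'I_n11) (j : 'I_n12) (o : O) : T := (pos1 i o.1.1, pos2 j o.1.2, o.2).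

Lemma preact_low d1 r (g : {ffun T -> 'I_r.+1}) i j (k : 'I_d1) :
  preact (Wl d1) (Bl d1) (Xg g) i j k =
  (g (posT i j (off k)) : nat)%:R - 2^-1 - (k %/ #|{: O}|)%:R.
Proof.
rewrite /preact /Wl.
rewrite (sum3_collapse (fun a b c => xat (Xg g) (a + i * s) (b + j * s) c) (off k)).
by rewrite xat_in /Xg /Bl.
Qed.

Lemma sign_low (u t : nat) :
  if (t < u)%N then 0 < u%:R - 2^-1 - t%:R :> R else u%:R - 2^-1 - t%:R < 0 :> R.
Proof.
have h0 : 0 < 2^-1 :> R by rewrite invr_gt0.
have h1 : 2^-1 < 1 :> R by rewrite invf_lt1 // ltr1n.
case: ltnP => H.
  have : (t.+1%:R <= u%:R :> R) by rewrite ler_nat.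
  rewrite -addn1 natrD => ?; lra.
have : (u%:R <= t%:R :> R) by rewrite ler_nat.
move=> ?; lra.
Qed.

Definition sgl d1 r (g : {ffun T -> 'I_r.+1}) : {ffun 'I_n11 * 'I_n12 * 'I_d1 -> bool} :=
  [ffun n : 'I_n11 * 'I_n12 * 'I_d1 => (n.2 %/ #|{: O}| < g (posT n.1.1 n.1.2 (off n.2)))%N].
Arguments sgl : clear implicits.

Lemma sgl_region d1 r (g : {ffun T -> 'I_r.+1}) :
  region_nonempty (Wl d1) (Bl d1) (sgl d1 r g).
Proof.
exists (Xg g) => i j k; rewrite ffunE preact_low /=.
exact: sign_low.
Qed.

Lemma sgl_diff d1 (g1 g2 : {ffun T -> 'I_(d1 %/ #|{: O}|).+1}) p :
  p \in Cov -> (g1 p < g2 p)%N -> sgl d1 _ g1 != sgl d1 _ g2.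
Proof.
set F := #|{: O}|; set r := (d1 %/ F)%N.
case: p => [[p1 p2] p3] Hp Hlt.
move: Hp; rewrite inE => /existsP [i /existsP [j /existsP [a /existsP [b /andP [/eqP E1 /eqP E2]]]]].
simpl in E1, E2.
set t := (g1 (p1, p2, p3) : nat).
have Ht : (t < r)%N.
  by apply: (leq_trans Hlt); rewrite -ltnS; exact: ltn_ord.
pose o : O := (a, b, p3).
have Hk : (t * F + enum_rank o < d1)%N.
  apply: (@leq_trans (t.+1 * F)); first by rewrite mulSnr ltn_add2l ltn_ord.
  apply: leq_trans (leq_trunc_div d1 F); by rewrite leq_mul2r Ht orbT.
pose k : 'I_d1 := Ordinal Hk.
have Hoff : off k = o.
  rewrite /off; rewrite -[RHS]enum_rankK; congr enum_val; apply: val_inj => /=.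
  by rewrite modnMDl modn_small.
have Hdiv : (k %/ F = t)%N by rewrite /= divnMDl ?HF // divn_small ?addn0.
have Hpos : posT i j o = (p1, p2, p3).
  rewrite /posT /=; congr (_, _, _); apply: val_inj => /=; by rewrite ?E1 ?E2.
apply/negP => /eqP /ffunP /(_ (i, j, k)); rewrite !ffunE /= Hoff Hdiv Hpos.
by rewrite ltnn Hlt.
Qed.

Lemma num_lower d1 :
  ((d1 %/ #|{: O}|).+1 ^ #|Cov| <= num_regions n01 n02 s (Wl d1) (Bl d1))%N.
Proof.
set r := (d1 %/ #|{: O}|)%N.
pose PF := pffun_on (ord0 : 'I_r.+1) Cov predT.
have -> : (r.+1 ^ #|Cov| = #|PF|)%N by rewrite card_pffun_on card_ord.
rewrite /num_regions -(card_in_imset (f := sgl d1 r)).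
  apply: subset_leq_card; apply/subsetP => σ /imsetP [g _ ->].
  rewrite inE; apply/asboolP; exact: sgl_region.
have Hsupp : forall g, g \in PF -> forall p, p \notin Cov -> g p = ord0.
  move=> g /pffun_onP [Hs _] p Hp; apply/eqP; apply: contraNT Hp => Hg.
  by apply: (subsetP Hs); rewrite inE.
move=> g1 g2 H1 H2 Heq; apply/ffunP => p.
case: (boolP (p \in Cov)) => Hp; last by rewrite !Hsupp.
case: (ltngtP (g1 p) (g2 p)) => H.
- by have := sgl_diff Hp H; rewrite Heq eqxx.
- by have := sgl_diff Hp H; rewrite Heq eqxx.
- exact: val_inj.
Qed.


Lemma max_ge d1 (W : filters R d0 f1 f2 d1) (B : biases R d1) :
  (num_regions n01 n02 s W B <= max_regions R n01 n02 d0 f1 f2 s d1)%N.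
Proof.
rewrite /max_regions.
have H : (num_regions n01 n02 s W B < #|{: pattern n01 n02 f1 f2 s d1}|.+1)%N.
  by rewrite ltnS /num_regions max_card.
apply: (@leq_bigmax_cond _ _ (fun i : 'I_#|{: pattern n01 n02 f1 f2 s d1}|.+1 => (i : nat)) (Ordinal H)) => /=.
by apply/asboolP; exists W, B.
Qed.

Lemma max_le d1 M : (forall (W : filters R d0 f1 f2 d1) (B : biases R d1), num_regions n01 n02 s W B <= M)%N ->
  (max_regions R n01 n02 d0 f1 f2 s d1 <= M)%N.
Proof.
move=> HM; apply/bigmax_leqP => i /asboolP [W [B <-]]; exact: HM.
Qed.

Lemma max_bounds d1 :
  ((d1 %/ #|{: O}|).+1 ^ #|Cov| <= max_regions R n01 n02 d0 f1 f2 s d1)%N /\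
  (max_regions R n01 n02 d0 f1 f2 s d1 <= (n11 * n12 * d1).+1 ^ #|Cov|)%N.
Proof.
split; first exact: leq_trans (num_lower d1) (max_ge _ _).
by apply: max_le => W B; apply: num_upper.
Qed.

Lemma theta_main : BigTheta R (fun d1 => max_regions R n01 n02 d0 f1 f2 s d1)
             (fun d1 => d1 ^ #|Cov|)%N.
Proof.
set F := #|{: O}|; set m := #|Cov|; set Nn := (n11 * n12)%N.
have HF0 : 0 < (F%:R : R) ^+ m by rewrite exprn_gt0 // ltr0n HF.
exists ((F%:R : R) ^+ m)^-1, ((Nn.+1)%:R ^+ m); split; first by rewrite invr_gt0.
split; first by rewrite exprn_gt0 // ltr0n.
exists 1%N => d Hd; have [Hlo Hup] := max_bounds d.
split.
  rewrite ler_pdivrMl // -natrX -natrM ler_nat.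
  apply: (@leq_trans (((d %/ F).+1 * F) ^ m)).
    by apply: expn_mono_base; apply: ltnW; apply: ltn_ceil; exact: HF.
  by rewrite expnMn mulnC leq_mul2l Hlo orbT.
rewrite -natrX -natrM ler_nat; apply: (leq_trans Hup).
rewrite -expnMn; apply: expn_mono_base.
rewrite /Nn; move: Hd; set q := (n11 * n12)%N; nia.
Qed.

End CNNProof.

Theorem theorem3 (R : realType) (n01 n02 d0 f1 f2 s : nat)
    (hf1 : (0 < f1 <= n01)%N) (hf2 : (0 < f2 <= n02)%N)
    (hd0 : (0 < d0)%N) (hs : (0 < s)%N) :
  BigTheta R (fun d1 => max_regions R n01 n02 d0 f1 f2 s d1)
             (fun d1 => d1 ^ covered_count n01 n02 d0 f1 f2 s)%N
  /\ ((covered_count n01 n02 d0 f1 f2 s = n01 * n02 * d0)%N ->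
     BigTheta R (fun d1 => max_regions R n01 n02 d0 f1 f2 s d1)
                (fun d1 => d1 ^ (n01 * n02 * d0))%N).
Proof.
have H := theta_main R hf1 hf2 hd0.
split; first exact: H.
by move=> <-; exact: H.
Qed.
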